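(* Let $K>1$ and let $\kappa=(x_i)_{i\in\mathbb Z}$ and $\eta=(y_i)_{i\in\mathbb Z}$ be independent $K$-contracting axes in a geodesic metric space $X$. Then there exists $K'>0$ such that: (1) for every set $J$ of consecutive integers, $\kappa|_J=(x_i)_{i\in J}$ and $\eta|_J=(y_i)_{i\in J}$ are $K'$-contracting axes; (2) for every set $J$ of consecutive integers containing $0$, $\operatorname{diam}\big(x_0\cup\pi_{\kappa|_J}(\eta)\big)<K'$; (3) for every positive integer $M$, $\operatorname{diam}\big(x_0\cup\pi_{\{x_0,\ldots,x_M\}}(\{x_i:i\le0\})\big)<K'$.
   Context: $X$ is a geodesic metric space. For $A\subseteq X$, $\pi_A(z)=\{a\in A:d(z,a)=d(z,A)\}$ and $\pi_A(B)=\bigcup_{b\in B}\pi_A(b)$. $A$ is $K$-contracting if $\pi_A(z)\ne\emptyset$ for all $z$ and $d(x,y)\le d(x,A)-K$ implies $\operatorname{diam}(\pi_A(x)\cup\pi_A(y))\le K$. A $K$-contracting axis indexed by a set $J$ of consecutive integers is a family $(x_i)_{i\in J}$ with $|i-j|/K-K\le d(x_i,x_j)\le K|i-j|+K$ whose image is $K$-contracting; projections onto it mean onto its image. Sequences $(x_i),(y_i)$ indexed by $\mathbb Z$ are independent if for every $M>0$ the set $\{(n,m):d(x_n,y_m)<M\}$ is bounded. *)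

(* Defs.v *)
From HB Require Import structures.
From mathcomp Require Import all_boot all_order all_algebra.
From mathcomp Require Import all_classical all_reals.
From mathcomp Require Import ereal.
Set Implicit Arguments. Unset Strict Implicit. Unset Printing Implicit Defensive.
Import Order.TTheory GRing.Theory Num.Theory.
Local Open Scope classical_set_scope.
Local Open Scope ring_scope.

Section Geo.
Variables (R : realType) (T : Type) (d : T -> T -> R).

Definition is_metric : Prop :=
  (forall x y, 0 <= d x y) /\ (forall x y, d x y = 0 <-> x = y) /\
  (forall x y, d x y = d y x) /\ (forall x y z, d x z <= d x y + d y z).

Definition geodesic : Prop :=
  forall x y, exists g : R -> T, g 0 = x /\ g (d x y) = y /\
    forall s t, 0 <= s <= d x y -> 0 <= t <= d x y ->
      d (g s) (g t) = `|s - t|.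

Definition dist_set (z : T) (A : set T) : \bar R :=
  ereal_inf [set (d z a)%:E | a in A].

Definition diam (S : set T) : \bar R :=
  ereal_sup [set (d a b)%:E | a in S & b in S].

Definition proj (A : set T) (z : T) : set T :=
  [set a | A a /\ (d z a)%:E = dist_set z A].

Definition proj_set (A B : set T) : set T :=
  \bigcup_(b in B) proj A b.

Definition contracting (K : R) (A : set T) : Prop :=
  (forall z, exists a, proj A z a) /\
  (forall x y, ((d x y)%:E <= dist_set x A - K%:E)%E ->
     (diam (proj A x `|` proj A y) <= K%:E)%E).

Definition consecutive (J : set int) : Prop :=
  (exists i, J i) /\ (forall i j k, J i -> J k -> i <= j <= k -> J j).

Definition contracting_axis (K : R) (J : set int) (x : int -> T) : Prop :=
  (forall i j, J i -> J j ->
     (`|i - j|%:~R / K - K <= d (x i) (x j)) /\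
     (d (x i) (x j) <= K * `|i - j|%:~R + K)) /\
  contracting K (x @` J).

Definition independent (x y : int -> T) : Prop :=
  forall M : R, 0 < M -> exists B : int, forall n m : int,
    d (x n) (y m) < M -> `|n| <= B /\ `|m| <= B.

End Geo.

(* Main.v *)
Require Import Defs.
From HB Require Import structures.
From mathcomp Require Import all_boot all_order all_algebra.
From mathcomp Require Import all_classical all_reals.
From mathcomp Require Import ereal.
From mathcomp Require Import lra zify.
Ltac lra2 := intros; lra.
Import Order.TTheory GRing.Theory Num.Theory.
Local Open Scope classical_set_scope.
Local Open Scope ring_scope.
Set Implicit Arguments. Unset Strict Implicit. Unset Printing Implicit Defensive.
Notation pj := Defs.proj.
Section Basics.
Variables (R : realType) (T : Type) (d : T -> T -> R).
Hypothesis hmet : is_metric d.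

Lemma d_ge0 a b : 0 <= d a b. Proof. by case: hmet. Qed.
Lemma d_sym a b : d a b = d b a. Proof. by case: hmet => _ [_ [h _]]. Qed.
Lemma d_tri a b c : d a c <= d a b + d b c. Proof. by case: hmet => _ [_ [_ h]]. Qed.
Lemma d_xx a : d a a = 0. Proof. by case: hmet => _ [h _]; apply/h. Qed.

Definition iso (g : R -> T) (l : R) := forall s t, 0 <= s <= l -> 0 <= t <= l ->
  d (g s) (g t) = `|s - t|.

Lemma iso_shift g l t1 : iso g l -> 0 <= t1 <= l -> iso (fun s => g (t1 + s)) (l - t1).
Proof.
move=> hg /andP[h1 h2] s t /andP[hs1 hs2] /andP[ht1 ht2].
rewrite hg; last (apply/andP; split; lra2).
  by congr (`| _ |); lra2.
apply/andP; split; lra2.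
Qed.

Lemma iso_rev g l : iso g l -> iso (fun s => g (l - s)) l.
Proof.
move=> hg s t /andP[hs1 hs2] /andP[ht1 ht2].
rewrite hg; try (apply/andP; split; lra2).
by rewrite -normrN; congr (`| _ |); lra2.
Qed.

Lemma iso_restr g l l' : iso g l -> 0 <= l' <= l -> iso g l'.
Proof.
move=> hg /andP[h1 h2] s t /andP[hs1 hs2] /andP[ht1 ht2].
by apply: hg; apply/andP; split; lra2.
Qed.

Lemma iso_d g l s t : iso g l -> 0 <= s -> s <= t -> t <= l -> d (g s) (g t) = t - s.
Proof.
move=> hg h1 h2 h3; rewrite hg; try (apply/andP; split; lra2).
by rewrite distrC ger0_norm; lra2.
Qed.

Lemma proj_min A z p a : pj d A z p -> A a -> d z p <= d z a.
Proof.
case=> _ hp ha; rewrite -lee_fin hp; apply: ereal_inf_lbound; by exists a.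
Qed.

Lemma proj_intro A z p : A p -> (forall a, A a -> d z p <= d z a) -> pj d A z p.
Proof.
move=> hp hmin; split => //; apply/le_anti/andP; split.
  by apply/ereal_infP => _ [a ha <-]; rewrite lee_fin; apply: hmin.
by apply: ereal_inf_lbound; exists p.
Qed.

Lemma proj_in A z p : pj d A z p -> A p. Proof. by case. Qed.

Lemma proj_self A a : A a -> pj d A a a.
Proof. move=> ha; apply: proj_intro => // b _; rewrite d_xx; exact: d_ge0. Qed.

Lemma dist_proj A z p : pj d A z p -> dist_set d z A = (d z p)%:E.
Proof. by case. Qed.

Lemma proj_same A z p q : pj d A z p -> pj d A z q -> d z p = d z q.
Proof.
move=> hp hq; apply/le_anti/andP; split.
  exact: (proj_min hp (proj_in hq)).
exact: (proj_min hq (proj_in hp)).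
Qed.

Lemma proj_lip A u v p q : pj d A u p -> pj d A v q -> d u p <= d u v + d v q.
Proof.
move=> hp hq; apply: le_trans (d_tri _ v _); apply: proj_min hp (proj_in hq).
Qed.

End Basics.

Section Ctr.
Variables (R : realType) (T : Type) (d : T -> T -> R).
Hypothesis hmet : is_metric d.
Variables (K : R) (A : set T).
Hypothesis hK0 : 0 < K.
Ltac lraK := intros; have ? := hK0; lra.
Hypothesis hA : contracting d K A.

Lemma ctr u v p a b : pj d A u p -> d u v <= d u p - K ->
  (pj d A u a \/ pj d A v a) -> (pj d A u b \/ pj d A v b) -> d a b <= K.
Proof.
move=> hp huv ha hb; case: hA => _ /(_ u v); rewrite (dist_proj hp) -EFinD lee_fin.
move=> /(_ huv) hdiam; rewrite -lee_fin; apply: le_trans hdiam.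
apply: ereal_sup_ubound; exists a => //; exists b => //.
Qed.

Lemma proj_ex z : exists p, pj d A z p. Proof. by case: hA => h _; apply: h. Qed.


Lemma proj_diam z a b : pj d A z a -> pj d A z b -> d a b <= 2 * K.
Proof.
move=> ha hb; have [hl|hl] := lerP K (d z a).
  have h := ctr (v:=z) ha; rewrite d_xx // in h.
  have : d a b <= K by apply: h; first lraK; left.
  lraK.
have h1 := d_tri hmet a z b; rewrite (d_sym hmet a z) in h1.
have h2 := proj_same ha hb; lraK.
Qed.

Lemma nat_bound r : exists n : nat, r <= n%:R * K.
Proof.
have [hr|hr] := lerP r 0; first by exists 0%N; rewrite mul0r.
have h0 : 0 <= r / K by apply: divr_ge0; lraK.
have := archi_boundP h0; set n := Num.Def.archi_bound _ => hn.
exists n; rewrite -ler_pdivrMr //; lraK.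
Qed.

Lemma chainL n : forall g l p, 0 <= l -> l <= n%:R * K -> iso d g l -> pj d A (g 0) p ->
  (exists t, [/\ 0 <= t, t <= l, (exists u, pj d A (g t) u /\ d (g t) u <= 2*K) &
       forall u, pj d A (g t) u -> d (g 0) p + d p u <= t + 6*K])
  \/ (forall u, pj d A (g l) u -> d (g 0) p + d p u <= l + 6*K)
  \/ (l <= d (g 0) p - K /\ forall u, pj d A (g l) u -> d p u <= K).
Proof.
elim: n => [|n IH] g l p hl0 hln hg hp.
  have [hr|hr] := lerP (d (g 0) p) (2*K).
    left; exists 0; split => //; first by exists p.
    move=> u hu; have := proj_diam hp hu; lraK.
  rewrite mul0r in hln; have hl : l = 0 by lraK.
  right; right; split; first lraK.
  move=> u hu; apply: (ctr (v := g l) hp) => //; [|by left|by right].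
  rewrite (iso_d hg) //; lraK.
have [hr|hr] := lerP (d (g 0) p) (2*K).
  left; exists 0; split => //; first by exists p.
  move=> u hu; have := proj_diam hp hu; lraK.
have [hl|hl] := lerP l (d (g 0) p - K).
  right; right; split => //.
  move=> u hu; apply: (ctr (v := g l) hp) => //; [|by left|by right].
  rewrite (iso_d hg) //; lraK.
have [t1 et1] : exists t1, t1 = d (g 0) p - K by eexists.
have ht1 : d (g 0) (g t1) = t1 by rewrite (iso_d hg) //; lraK.
have [p' hp'] := proj_ex (g t1).
have hpu : forall u, pj d A (g t1) u -> d p u <= K.
  move=> u hu; apply: (ctr (v := g t1) hp); [rewrite ht1; lraK|by left|by right].
have hpp' := hpu _ hp'.
have [hr'|hr'] := lerP (d (g t1) p') (2*K).
  left; exists t1; split; [lraK|lraK|by exists p'|].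
  move=> u hu; have := hpu _ hu; lraK.
have hln' : l - t1 <= n%:R * K.
  move: hln; rewrite -addn1 natrD mulrDl mul1r; lraK.
have hg' := iso_shift hg (t1 := t1); have /hg' {}hg' : 0 <= t1 <= l by apply/andP; split; lraK.
have hp0 : pj d A ((fun s => g (t1 + s)) 0) p' by rewrite /= addr0.
have hl0' : 0 <= l - t1 by lraK.
have := IH _ _ _ hl0' hln' hg' hp0; rewrite /= addr0 (addrC t1) subrK.
have hpp'2 : forall u, d p u <= K + d p' u by move=> u; have := d_tri hmet p p' u; lraK.
case=> [[t' [ht'0 ht'l [u0 hu0] hest]]|[hr1|[hr2 hr3]]].
- left; exists (t1 + t'); split; [lraK|lraK|by exists u0|].
  move=> u hu; have := hest _ hu; have := hpp'2 u; lraK.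
- right; left; move=> u hu; have := hr1 _ hu; have := hpp'2 u; lraK.
- right; left; move=> u hu; have := hr3 _ hu; have := hpp'2 u; lraK.
Qed.

Hypothesis hgeo : geodesic d.

Lemma pe1 m a p : A a -> pj d A m p -> d m p + d p a <= d m a + 8*K.
Proof.
move=> ha hp; have [g [g0 [gl hg]]] := hgeo m a.
have [n hn] := nat_bound (d m a).
have hp' : pj d A (g 0) p by rewrite g0.
case: (chainL (d_ge0 hmet m a) hn hg hp'); rewrite g0 ?gl.
- move=> [t [ht0 htl [u0 [hu0 hu0']] hest]].
  have h1 := hest _ hu0.
  have h2 := d_tri hmet p u0 (g t); have h3 := d_tri hmet p (g t) a.
  have h4 : d (g t) a = d m a - t by rewrite -{1}gl (iso_d hg) //.
  rewrite (d_sym hmet u0) in h2; lraK.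
- case=> [h|[h _]].
    have := h _ (proj_self hmet ha); lraK.
  have := proj_min hp ha; lraK.
Qed.

Lemma combine g L z w p q tv m v0 : iso d g L -> 0 <= tv -> tv <= L -> g 0 = z -> g L = w ->
  g tv = m -> pj d A z p -> pj d A w q -> pj d A m v0 -> d m v0 <= 2*K ->
  (forall v, pj d A m v -> d w q + d q v <= L - tv + 6*K) ->
  d z p + d w q + d p q <= L + 16*K.
Proof.
move=> hg htv0 htvL g0 gL gm; subst m; move=> hp hq hv0 hv0' hestw.
have [n hn] := nat_bound tv.
have hg' := iso_restr hg (l' := tv); have /hg' {}hg' : 0 <= tv <= L by apply/andP.
have hp' : pj d A (g 0) p by rewrite g0.
have hw := hestw _ hv0.
have hpq := d_tri hmet p v0 q; rewrite (d_sym hmet v0 q) in hpq.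
case: (chainL htv0 hn hg' hp'); rewrite g0.
- move=> [t [ht0 htl [u0 [hu0 hu0']] hest]].
  have h1 := hest _ hu0.
  have h2 := d_tri hmet p u0 q; rewrite (d_sym hmet u0 q) in h2.
  have h3 := d_tri hmet u0 (g t) v0; have h4 := d_tri hmet (g t) (g tv) v0.
  have h5 : d (g t) (g tv) = tv - t by rewrite (iso_d hg) //; lraK.
  have h6 := d_tri hmet q v0 u0; rewrite (d_sym hmet v0 u0) in h6.
  rewrite (d_sym hmet u0 (g t)) in h3; lraK.
- case=> [h|[h h']].
    have := h _ hv0; lraK.
  have := h' _ hv0; have := proj_min hp (proj_in hv0).
  have := d_tri hmet z (g tv) v0; rewrite -g0 (iso_d hg) //; lraK.
Qed.

Lemma pe z w p q : pj d A z p -> pj d A w q ->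
  d p q <= 2*K \/ d z p + d w q + d p q <= d z w + 16*K.
Proof.
move=> hp hq.
have [hc1|hc1] := lerP (d z w) (d z p - K).
  left; have : d p q <= K by apply: (ctr (v:=w) hp hc1); [left|right].
  lraK.
have [hc2|hc2] := lerP (d z w) (d w q - K).
  left; have : d q p <= K by apply: (ctr (v:=z) hq); [rewrite (d_sym hmet w z)|left|right].
  rewrite (d_sym hmet q p); lraK.
have [g [g0 [gL hg]]] := hgeo z w.
set L := d z w in hc1 hc2 gL hg *.
have hlw := proj_lip hmet hq hp; have hlz := proj_lip hmet hp hq.
rewrite (d_sym hmet w z) -/L in hlw; rewrite -/L in hlz.
have [hc3|hc3] := lerP L (d z p + d w q - 2*K).
  left; have [t1 et1] : exists t1, t1 = d z p - K by eexists.
  have [pm hpm] := proj_ex (g t1).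
  have h1 : d z (g t1) = t1 by rewrite -{1}g0 (iso_d hg); lraK.
  have h2 : d w (g t1) = L - t1 by rewrite -{1}gL d_sym // (iso_d hg); lraK.
  have h3 : d p pm <= K by apply: (ctr (v := g t1) hp); [lraK|left|right].
  have h4 : d q pm <= K by apply: (ctr (v := g t1) hq); [lraK|left|right].
  have := d_tri hmet p pm q; rewrite (d_sym hmet pm q); lraK.
right; have [S eS] : exists S, S = (d z p + L - d w q) / 2 by eexists.
have hS0 : 0 <= S by lraK.
have hSL : S <= L by lraK.
have [n hn] := nat_bound S.
have hgS := iso_restr hg (l' := S); have /hgS {}hgS : 0 <= S <= L by apply/andP.
have hp' : pj d A (g 0) p by rewrite g0.
have hgr := iso_rev hg.
case: (chainL hS0 hn hgS hp'); rewrite ?g0.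
- move=> [t [ht0 htl [u0 [hu0 hu0']] hest]].
  have e3 : (fun s => g (L - s)) (L - t) = g t by rewrite /=; congr g; lraK.
  have hest' : forall v, pj d A (g t) v -> d z p + d p v <= L - (L - t) + 6*K.
    by move=> v hv; have := hest v hv; lraK.
  have a1 : 0 <= L - t by lraK.
  have a2 : L - t <= L by lraK.
  have a3 : (fun s => g (L - s)) 0 = w by rewrite /= subr0.
  have a4 : (fun s => g (L - s)) L = z by rewrite /= subrr.
  have := combine hgr a1 a2 a3 a4 e3 hq hp hu0 hu0' hest'.
  rewrite (d_sym hmet q p); lraK.
- case=> [hr1|[hr2 _]]; last by move: hr2; lraK.
  have [m hm] := nat_bound (L - S).
  have hgS' := iso_restr hgr (l' := L - S); have /hgS' {}hgS' : 0 <= L - S <= L by apply/andP; split; lraK.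
  have hq' : pj d A ((fun s => g (L - s)) 0) q by rewrite /= subr0 gL.
  have hLS : 0 <= L - S by lraK.
  case: (chainL hLS hm hgS' hq'); rewrite /= subr0 ?gL.
  + move=> [t [ht0 htl [u0 [hu0 hu0']] hest]].
    have hest' : forall v, pj d A (g (L - t)) v -> d w q + d q v <= L - (L - t) + 6*K.
      by move=> v hv; have := hest v hv; lraK.
    have a1 : 0 <= L - t by lraK.
    have a2 : L - t <= L by lraK.
    have := combine hg a1 a2 g0 gL erefl hp hq hu0 hu0' hest'.
    lraK.
  + have -> : L - (L - S) = S by lraK.
    case=> [hr3|[hr4 _]]; last by move: hr4; lraK.
    have [pm hpm] := proj_ex (g S).
    have := hr1 _ hpm; have := hr3 _ hpm.
    have := d_tri hmet p pm q; rewrite (d_sym hmet pm q); lraK.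
Qed.

End Ctr.

Section IntAux.
Variable (R : realType).
Lemma ab_ge (i j : int) : (i%:~R - j%:~R <= `|i - j|%:~R :> R) /\ (j%:~R - i%:~R <= `|i - j|%:~R :> R).
Proof.
rewrite intr_norm intrB; split; first exact: ler_norm.
by rewrite distrC; exact: ler_norm.
Qed.
Lemma ab_le (i j : int) (c : R) : i%:~R - j%:~R <= c -> j%:~R - i%:~R <= c -> `|i - j|%:~R <= c.
Proof. by move=> h1 h2; rewrite intr_norm intrB ler_norml; apply/andP; split => //; rewrite lerNl opprB. Qed.
Lemma ab_ge0 (i j : int) : 0 <= (`|i - j|%:~R : R).
Proof. by rewrite intr_norm. Qed.
Lemma cast_le (i j : int) : i <= j -> (i%:~R : R) <= j%:~R.
Proof. by rewrite ler_int. Qed.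
Lemma cast_lt (i j : int) : i < j -> (i%:~R : R) < j%:~R.
Proof. by rewrite ltr_int. Qed.
Lemma int_above (r : R) : exists n : int, r <= n%:~R /\ n%:~R <= r + 1.
Proof.
exists (Num.ceil r); have /andP[h1 h2] := ceil_itv r; split => //.
by move: h1; rewrite intrB; lra.
Qed.
Lemma nat_above (r : R) : exists n : nat, r <= n%:R.
Proof.
have [hr|hr] := lerP r 0; first by exists 0%N.
have := archi_boundP (ltW hr) => h; eexists; exact: ltW h.
Qed.

Lemma ivt (Rel : nat -> int -> Prop) (D : R) (a : int) N :
  (forall n, exists j, Rel n j) ->
  (forall n j j', Rel n j -> Rel n.+1 j' -> `|j - j'|%:~R <= D) ->
  (forall j j', Rel 0%N j -> Rel 0%N j' -> `|j - j'|%:~R <= D) ->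
  (exists j0, Rel 0%N j0 /\ j0 <= a) -> (exists j, Rel N j /\ a <= j) ->
  exists n j, Rel n j /\ `|j - a|%:~R <= D.
Proof.
move=> H1 H2 H3 [j0 [h0 h0a]]; elim: N => [|N IH] [j [hj hja]].
  exists 0%N, j; split => //; apply: le_trans (H3 _ _ hj h0); rewrite ler_int; lia.
have [jN hN] := H1 N; have [h|h] := lerP a jN.
  by apply: IH; exists jN.
exists N.+1, j; split => //; apply: le_trans (H2 _ _ _ hN hj).
rewrite ler_int; lia.
Qed.

Lemma int_min (P : int -> Prop) i : (exists j, P j) -> (forall j, P j -> i <= j) ->
  exists a, P a /\ forall j, P j -> a <= j.
Proof.
case=> j hj hlb.
suff: forall n : nat, forall j, P j -> j - i <= n%:Z -> exists a, P a /\ forall j, P j -> a <= j.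
  by move=> /(_ `|j - i|%N j hj); apply; lia.
elim=> [|n IH] j' hj' hn.
  exists j'; split=> // k hk; have := hlb _ hk; have := hlb _ hj'; lia.
case: (pselect (exists k, P k /\ k - i <= n%:Z)) => [[k [hk hkn]]|hno].
  exact: IH hk hkn.
exists j'; split => // k hk; case: (lerP (k - i) n%:Z) => h.
  by exfalso; apply: hno; exists k.
lia.
Qed.

Lemma int_max (P : int -> Prop) i : (exists j, P j) -> (forall j, P j -> j <= i) ->
  exists a, P a /\ forall j, P j -> j <= a.
Proof.
case=> j hj hub.
have h1 : exists k, P (- k) by exists (- j); rewrite opprK.
have h2 : forall k, P (- k) -> - i <= k by move=> k hk; have := hub _ hk; lia.
have [a [ha hmin]] := @int_min (fun k => P (- k)) (- i) h1 h2.
exists (- a); split => // k hk; have := hmin (- k); rewrite opprK => /(_ hk); lia.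
Qed.

Lemma fin_argmin (P : int -> Prop) (f : int -> R) a n : P a ->
  exists c, [/\ P c, a <= c, c <= a + n%:Z &
    forall j, P j -> a <= j -> j <= a + n%:Z -> f c <= f j].
Proof.
move=> ha; elim: n => [|n [c [hc hac hcn hmin]]].
  exists a; split => //; first lia.
  by move=> j _ h1 h2; have -> : j = a by lia.
case: (pselect (P (a + n.+1%:Z) /\ f (a + n.+1%:Z) < f c)) => [[h1 h2]|hno].
  exists (a + n.+1%:Z); split => //; try lia.
  move=> j hj h3 h4; case: (lerP j (a + n%:Z)) => h5.
    by have := hmin j hj h3 h5; lra.
  by have -> : j = a + n.+1%:Z by lia.
exists c; split => //; try lia.
move=> j hj h3 h4; case: (lerP j (a + n%:Z)) => h5; first exact: hmin.
have ej : j = a + n.+1%:Z by lia.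
rewrite leNgt; apply/negP => h6; apply: hno; split; subst j => //.
Qed.

Lemma side (J : set int) i : consecutive J -> ~ J i ->
  (forall j, J j -> i < j) \/ (forall j, J j -> j < i).
Proof.
case=> _ hJ hi; case: (pselect (exists j, J j /\ j < i)) => [[j1 [hj1 h1]]|hno].
  right => j hj; rewrite ltNge; apply/negP => h; apply: hi; apply: (hJ j1 i j) => //.
  by apply/andP; split => //; apply: ltW.
left => j hj; rewrite ltNge; apply/negP => h; have [e|hlt] := eqVneq j i.
  by subst j.
by apply: hno; exists j; split => //; rewrite lt_neqAle hlt h.
Qed.

Lemma clamp_lip (J : set int) i k cz cw : J cz -> J cw ->
  (cz = i \/ (i < cz /\ forall j, J j -> cz <= j) \/ (cz < i /\ forall j, J j -> j <= cz)) ->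
  (cw = k \/ (k < cw /\ forall j, J j -> cw <= j) \/ (cw < k /\ forall j, J j -> j <= cw)) ->
  `|cz - cw| <= `|i - k|.
Proof.
move=> hcz hcw [e|[[h1 h2]|[h1 h2]]] [e'|[[h1' h2']|[h1' h2']]];
  try (specialize (h2 _ hcw)); try (specialize (h2' _ hcz)); lia.
Qed.
End IntAux.

Section Axis.
Variables (R : realType) (T : Type) (d : T -> T -> R).
Hypothesis hmet : is_metric d.
Hypothesis hgeo : geodesic d.
Variables (K : R) (x : int -> T).
Hypothesis hK1 : 1 < K.
Hypothesis hx : contracting_axis d K setT x.
Ltac lraX := intros; have ? := hK1; lra.

Let A := x @` setT.
Lemma hA : contracting d K A. Proof. by case: hx. Qed.
Lemma hK0 : 0 < K. Proof. have ? := hK1; lra. Qed.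

Lemma qi_lo i j : `|i - j|%:~R / K - K <= d (x i) (x j).
Proof. by case: hx => /(_ i j I I) []. Qed.
Lemma qi_hi i j : d (x i) (x j) <= K * `|i - j|%:~R + K.
Proof. by case: hx => /(_ i j I I) []. Qed.

Lemma idx_bound i j c : d (x i) (x j) <= c -> `|i - j|%:~R <= K * (c + K).
Proof.
move=> h; have h2 := qi_lo i j; rewrite mulrC -(ler_pdivrMr _ _ hK0).
lraX.
Qed.

Lemma idx_of p : A p -> exists j, x j = p.
Proof. by case=> j _ <-; exists j. Qed.

Lemma inA j : A (x j). Proof. by exists j. Qed.

Lemma projx z : exists j, pj d A z (x j).
Proof. have [p hp] := proj_ex hA z; have [j ej] := idx_of (proj_in hp); subst p; by exists j. Qed.

Definition Dj := K * ((2 * K + 4) + K).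

Lemma jump u v j j' : d u v <= 1 -> pj d A u (x j) -> pj d A v (x j') -> `|j - j'|%:~R <= Dj.
Proof.
move=> huv hj hj'; apply: idx_bound.
have [h|h] := lerP 1 (d u (x j) - K).
  have : d (x j) (x j') <= K by apply: (ctr hA (v := v) hj); [lraX|left|right].
  lraX.
have h1 := proj_lip hmet hj' hj; rewrite (d_sym hmet v u) in h1.
have h2 := d_tri hmet (x j) u (x j'); have h3 := d_tri hmet u v (x j').
rewrite (d_sym hmet (x j) u) in h2; lraX.
Qed.

Lemma min_prop (n : nat) (L : R) : 0 <= L ->
  0 <= Num.min n%:R L /\ Num.min n%:R L <= L /\ `|Num.min n%:R L - Num.min n.+1%:R L| <= 1.
Proof.
move=> hL; rewrite !minEle; have hn : (n%:R : R) <= n.+1%:R by rewrite ler_nat.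
have hn0 : (0 : R) <= n%:R by [].
have hn1 : (n.+1%:R : R) = n%:R + 1 by rewrite -natr1.
case: ifP => h1; case: ifP => h2; rewrite ?subrr ?normr0; split => //; try lraX;
  try (split; [lraX|]); rewrite ler_norml; apply/andP; split; lraX.
Qed.

Lemma projivt g L a : iso d g L -> 0 <= L ->
  (exists j0, pj d A (g 0) (x j0) /\ j0 <= a) -> (exists k, pj d A (g L) (x k) /\ a <= k) ->
  exists t j, [/\ 0 <= t, t <= L, pj d A (g t) (x j) & `|j - a|%:~R <= Dj].
Proof.
move=> hg hL h0 hN.
pose Rel n j := pj d A (g (Num.min n%:R L)) (x j).
have [N hNL] := nat_above L.
have e0 : Num.min (0%N)%:R L = 0 by rewrite minEle hL.
have eN : Num.min N%:R L = L by rewrite minEle; case: ifP => // h; apply/eqP; rewrite eq_le h hNL.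
have := @ivt R Rel Dj a N.
case.
- by move=> n; apply: projx.
- move=> n j j' hj hj'; apply: jump hj hj'.
  have [h1 [h2 h3]] := min_prop n hL; have [h4 [h5 h6]] := min_prop n.+1 hL.
  by rewrite hg ?h1 ?h2 ?h4 ?h5.
- move=> j j' hj hj'; apply: jump hj hj'; by rewrite d_xx.
- by case: h0 => j0 [h0 h0a]; exists j0; rewrite /Rel e0.
- by case: hN => k [hk hka]; exists k; rewrite /Rel eN.
move=> n [j [hj hja]]; have [h1 [h2 _]] := min_prop n hL.
by exists (Num.min n%:R L), j; split.
Qed.


Definition CM := 16*K + 2*(K*Dj + K).

Lemma Dj_ge0 : 0 <= Dj. Proof. rewrite /Dj; apply: mulr_ge0; lraX. Qed.

Lemma morse i a k : i <= a -> a <= k -> d (x i) (x a) + d (x a) (x k) <= d (x i) (x k) + CM.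
Proof.
move=> hia hak; have [g [g0 [gL hg]]] := hgeo (x i) (x k).
have hL := d_ge0 hmet (x i) (x k).
have hs : exists j0, pj d A (g 0) (x j0) /\ j0 <= a.
  exists i; split; last exact: hia. rewrite g0. exact: (proj_self hmet (inA i)).
have he : exists k0, pj d A (g (d (x i) (x k))) (x k0) /\ a <= k0.
  exists k; split; last exact: hak. rewrite gL. exact: (proj_self hmet (inA k)).
have [t [j [ht0 htL hj hja]]] := projivt hg hL hs he.
have h1 := pe1 hmet hK0 hA hgeo (inA i) hj.
have h2 := pe1 hmet hK0 hA hgeo (inA k) hj.
have e1 : d (g t) (x i) = t by rewrite -g0 d_sym // (iso_d hg) //; lraX.
have e2 : d (g t) (x k) = d (x i) (x k) - t by rewrite -{1}gL (iso_d hg) //.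
have h3 : d (x j) (x a) <= K * Dj + K.
  have := qi_hi j a; have : K * `|j - a|%:~R <= K * Dj by rewrite ler_pM2l ?hK0.
  lraX.
have h4 := d_tri hmet (x i) (x j) (x a); have h5 := d_tri hmet (x a) (x j) (x k).
rewrite (d_sym hmet (x i) (x j)) in h4; rewrite (d_sym hmet (x a) (x j)) in h5.
have := d_ge0 hmet (g t) (x j); rewrite /CM; lraX.
Qed.

Lemma keyL z i a j : pj d A z (x i) -> i <= a -> a <= j ->
  d z (x a) + d (x a) (x j) <= d z (x j) + 8*K + CM.
Proof.
move=> hz hia haj; have h1 := pe1 hmet hK0 hA hgeo (inA j) hz.
have h2 := morse hia haj; have h3 := d_tri hmet z (x i) (x a); lraX.
Qed.

Lemma keyR z i a j : pj d A z (x i) -> j <= a -> a <= i ->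
  d z (x a) + d (x a) (x j) <= d z (x j) + 8*K + CM.
Proof.
move=> hz hja hai; have h1 := pe1 hmet hK0 hA hgeo (inA j) hz.
have h2 := morse hja hai; have h3 := d_tri hmet z (x i) (x a).
rewrite (d_sym hmet (x j) (x i)) (d_sym hmet (x j) (x a)) (d_sym hmet (x a) (x i)) in h2; lraX.
Qed.

Definition F := 10*K + CM.

Lemma subproj_in J z i b : pj d A z (x i) -> J i -> pj d (x @` J) z b -> pj d A z b /\ d b (x i) <= F.
Proof.
move=> hz hi hb; have hbA : A b by case: (proj_in hb) => j _ <-; exists j.
have hbz : pj d A z b.
  apply: proj_intro => // a ha; apply: le_trans (proj_min hz ha).
  by apply: (proj_min hb); exists i.
split => //; have := proj_diam hmet hK0 hA hbz hz; rewrite /F /CM.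
have := Dj_ge0; have : 0 <= K * Dj by apply: mulr_ge0; [lraX|exact: Dj_ge0].
lraX.
Qed.

Lemma subprojL J z i a b : pj d A z (x i) -> J a -> i < a -> (forall j, J j -> a <= j) ->
  pj d (x @` J) z b -> d b (x a) <= F.
Proof.
move=> hz ha hia hmin hb; case: (proj_in hb) => j hj ebj; subst b.
have := keyL hz (ltW hia) (hmin _ hj).
have := proj_min hb (ex_intro2 _ _ a ha erefl).
rewrite (d_sym hmet (x j)) /F; lraX.
Qed.

Lemma subprojR J z i a b : pj d A z (x i) -> J a -> a < i -> (forall j, J j -> j <= a) ->
  pj d (x @` J) z b -> d b (x a) <= F.
Proof.
move=> hz ha hia hmax hb; case: (proj_in hb) => j hj ebj; subst b.
have := keyR hz (hmax _ hj) (ltW hia).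
have := proj_min hb (ex_intro2 _ _ a ha erefl).
rewrite (d_sym hmet (x j)) /F; lraX.
Qed.


Lemma bprojL J z i a : pj d A z (x i) -> J a -> i < a -> (forall j, J j -> a <= j) ->
  exists b, pj d (x @` J) z b.
Proof.
move=> hz ha hia hmin.
have [n hn] := nat_above (K * (9*K + CM)).
have [c [hc hac hcn hcmin]] := fin_argmin (fun j => d z (x j)) n ha.
exists (x c); apply: proj_intro; first by exists c.
move=> _ [j hj <-]; case: (lerP j (a + n%:Z)) => h; first exact: hcmin j hj (hmin _ hj) h.
have hk := keyL hz (ltW hia) (hmin _ hj).
have hfa := hcmin a ha (lexx a) (ltac:(lia)).
have h1 := qi_lo a j; have [_ h2] := ab_ge R a j.
have h3 : (a + n%:Z + 1)%:~R <= (j%:~R : R) by apply: cast_le; lia.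
rewrite !intrD in h3.
have h4 : 9*K + CM <= `|a - j|%:~R / K.
  rewrite ler_pdivlMr ?hK0 // mulrC; apply: le_trans hn _; lraX.
lraX.
Qed.

Lemma bprojR J z i a : pj d A z (x i) -> J a -> a < i -> (forall j, J j -> j <= a) ->
  exists b, pj d (x @` J) z b.
Proof.
move=> hz ha hia hmax.
have [n hn] := nat_above (K * (9*K + CM)).
have ha' : (fun j => J (- j)) (- a) by rewrite /= opprK.
have [c [hc hac hcn hcmin]] := @fin_argmin R (fun j => J (- j)) (fun j => d z (x (- j))) (- a) n ha'.
exists (x (- c)); apply: proj_intro; first by exists (- c).
move=> _ [j hj <-].
have hj' : J (- (- j)) by rewrite opprK.
have hja : - a <= - j by have := hmax _ hj; lia.
case: (lerP (- j) (- a + n%:Z)) => h.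
  by have := hcmin (- j) hj' hja h; rewrite opprK.
have hk := keyR hz (hmax _ hj) (ltW hia).
have hfa := hcmin (- a) ha' (lexx _) (ltac:(lia)); rewrite /= opprK in hfa.
have h1 := qi_lo a j; have [h2 _] := ab_ge R a j.
have h3 : (j + n%:Z + 1)%:~R <= (a%:~R : R) by apply: cast_le; lia.
rewrite !intrD in h3.
have h4 : 9*K + CM <= `|a - j|%:~R / K.
  rewrite ler_pdivlMr ?hK0 // mulrC; apply: le_trans hn _; lraX.
lraX.
Qed.

Lemma subproj J z i : consecutive J -> pj d A z (x i) ->
  exists c, [/\ J c, c = i \/ (i < c /\ forall j, J j -> c <= j) \/ (c < i /\ forall j, J j -> j <= c)
   & forall b, pj d (x @` J) z b -> d b (x c) <= F].
Proof.
move=> hJ hz; case: (pselect (J i)) => hi.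
  exists i; split => //; first by left.
  by move=> b hb; case: (subproj_in hz hi hb).
case: (side hJ hi) => hs.
  have [a [ha hmin]] := int_min hJ.1 (fun j hj => ltW (hs j hj)).
  exists a; split => //; first by right; left; split => //; apply: hs.
  by move=> b hb; apply: subprojL hz ha (hs _ ha) hmin hb.
have [a [ha hmax]] := int_max hJ.1 (fun j hj => ltW (hs j hj)).
exists a; split => //; first by right; right; split => //; apply: hs.
by move=> b hb; apply: subprojR hz ha (hs _ ha) hmax hb.
Qed.

Lemma bproj J z : consecutive J -> exists b, pj d (x @` J) z b.
Proof.
move=> hJ; have [i hz] := projx z; case: (pselect (J i)) => hi.
  exists (x i); apply: proj_intro; first by exists i.
  move=> _ [j hj <-]; exact: proj_min hz (inA j).
case: (side hJ hi) => hs.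
  have [a [ha hmin]] := int_min hJ.1 (fun j hj => ltW (hs j hj)).
  exact: bprojL hz ha (hs _ ha) hmin.
have [a [ha hmax]] := int_max hJ.1 (fun j hj => ltW (hs j hj)).
exact: bprojR hz ha (hs _ ha) hmax.
Qed.


Definition G := K * (K * (2*K + K)) + K.

Lemma CM_ge0 : 0 <= CM.
Proof. rewrite /CM; have := Dj_ge0; have : 0 <= K * Dj by apply: mulr_ge0; [lraX|exact: Dj_ge0]. lraX. Qed.

Lemma F_ge0 : 0 <= F.
Proof. rewrite /F /CM; have := Dj_ge0; have : 0 <= K * Dj by apply: mulr_ge0; [lraX|exact: Dj_ge0]. lraX. Qed.
Lemma G_ge0 : 0 <= G.
Proof. rewrite /G; have : 0 <= K * (K * (2*K + K)) by apply: mulr_ge0; [lraX|apply: mulr_ge0; lraX]. lraX. Qed.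

Lemma subaxis_ctr J Kp : consecutive J -> 16*K + CM < Kp -> 2*F + G <= Kp ->
  contracting d Kp (x @` J).
Proof.
move=> hJ hK1' hK2; split; first by move=> z; apply: bproj.
move=> z w hzw; have [qz hqz] := bproj z hJ.
rewrite (dist_proj hqz) -EFinD lee_fin in hzw.
have [i hi] := projx z; have [k hk] := projx w.
have [cz [hcz trz hbz]] := subproj hJ hi; have [cw [hcw trw hbw]] := subproj hJ hk.
suff hG : d (x cz) (x cw) <= G.
  apply: ge_ereal_sup => _ [a ha [b hb] <-]; rewrite lee_fin.
  have hF := F_ge0.
  case: ha => ha; case: hb => hb.
  - have := hbz _ ha; have := hbz _ hb; have := d_tri hmet a (x cz) b.
    rewrite (d_sym hmet (x cz) b); have := G_ge0; lraX.
  - have := hbz _ ha; have := hbw _ hb; have := d_tri hmet a (x cz) b.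
    have := d_tri hmet (x cz) (x cw) b; rewrite (d_sym hmet (x cw) b); lraX.
  - have := hbw _ ha; have := hbz _ hb; have := d_tri hmet a (x cw) b.
    have := d_tri hmet (x cw) (x cz) b; rewrite (d_sym hmet (x cz) b) (d_sym hmet (x cw) (x cz)); lraX.
  - have := hbw _ ha; have := hbw _ hb; have := d_tri hmet a (x cw) b.
    rewrite (d_sym hmet (x cw) b); have := G_ge0; lraX.
have hqzc : d z qz <= d z (x cz) by apply: (proj_min hqz); exists cz.
have hGn : forall c c', `|c - c'|%:~R <= K * (2*K + K) -> d (x c) (x c') <= G.
  move=> c c' h; have := qi_hi c c'; have : K * `|c - c'|%:~R <= K * (K * (2*K + K)).
    by rewrite ler_pM2l ?hK0.
  rewrite /G; lraX.
have hρw := d_ge0 hmet w (x k); have hik := d_ge0 hmet (x i) (x k).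
have [hnear|hfar] := pe hmet hK0 hA hgeo hi hk.
  apply: hGn; apply: le_trans (idx_bound hnear).
  by rewrite ler_int; apply: (clamp_lip hcz hcw trz trw).
have hCM := CM_ge0.
case: trz => [e|[[h1 h2]|[h1 h2]]].
- subst cz; lraX.
- case: (lerP cz k) => h3.
    have := morse (ltW h1) h3; have := d_tri hmet z (x i) (x cz).
    have := d_ge0 hmet (x cz) (x k); lraX.
  case: trw => [e|[[h4 h5]|[h4 h5]]].
  + by subst cw; have := h2 _ hcw; lia.
  + have := h2 _ hcw; have := h5 _ hcz => h6 h7.
    have -> : cz = cw by lia.
    rewrite d_xx //; exact: G_ge0.
  + by have := h2 _ hcw; have := h5 _ hcz; lia.
- case: (lerP k cz) => h3.
    have := morse h3 (ltW h1); have := d_tri hmet z (x i) (x cz).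
    rewrite (d_sym hmet (x k) (x cz)) (d_sym hmet (x k) (x i)) (d_sym hmet (x cz) (x i)).
    have := d_ge0 hmet (x cz) (x k); lraX.
  case: trw => [e|[[h4 h5]|[h4 h5]]].
  + by subst cw; have := h2 _ hcw; lia.
  + by have := h2 _ hcw; have := h5 _ hcz; lia.
  + have := h2 _ hcw; have := h5 _ hcz => h6 h7.
    have -> : cz = cw by lia.
    rewrite d_xx //; exact: G_ge0.
Qed.

Lemma subaxis J Kp : consecutive J -> K <= Kp -> 16*K + CM < Kp -> 2*F + G <= Kp ->
  contracting_axis d Kp J x.
Proof.
move=> hJ hKp h1 h2; split; last exact: subaxis_ctr.
move=> i j _ _; have l1 := qi_lo i j; have l2 := qi_hi i j; have g0 := ab_ge0 R i j.
split.
  have : `|i - j|%:~R / Kp <= `|i - j|%:~R / K.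
    apply: ler_wpM2l => //; rewrite lef_pV2 ?posrE //; lraX.
  lraX.
have : K * `|i - j|%:~R <= Kp * `|i - j|%:~R by apply: ler_wpM2r.
lraX.
Qed.

End Axis.

Section Indep.
Variables (R : realType) (T : Type) (d : T -> T -> R).
Hypothesis hmet : is_metric d.
Hypothesis hgeo : geodesic d.
Variables (K : R) (x y : int -> T).
Hypothesis hK1 : 1 < K.
Hypothesis hx : contracting_axis d K setT x.
Hypothesis hy : contracting_axis d K setT y.
Hypothesis hind : independent d x y.
Ltac lraX := intros; have ? := hK1; lra.

Lemma near_eta g L m0 m1 t : iso d g L -> g 0 = y m0 -> g L = y m1 -> 0 <= t -> t <= L ->
  exists l, d (g t) (y l) <= 8*K.
Proof.
move=> hg g0 gL ht0 htL; have [l hl] := projx hy (g t); exists l.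
have hK0' := hK0 hK1; have hAy := hA hy.
have h1 := pe1 hmet hK0' hAy hgeo (inA y m0) hl.
have h2 := pe1 hmet hK0' hAy hgeo (inA y m1) hl.
have e1 : d (g t) (y m0) = t by rewrite -g0 d_sym // (iso_d hg) //; lraX.
have e2 : d (g t) (y m1) = L - t by rewrite -gL (iso_d hg) //.
have e3 : d (y m0) (y m1) = L by rewrite -g0 -gL (iso_d hg) //; lraX.
have h3 := d_tri hmet (y m0) (y l) (y m1); rewrite (d_sym hmet (y m0) (y l)) in h3.
lraX.
Qed.

Lemma bound_up : exists N : R, forall m k, pj d (range x) (y m) (x k) -> k%:~R <= N.
Proof.
have hK0' := hK0 hK1; have hAx := hA hx.
have [i0 hi0] := projx hx (y 0).
have hM0 : (0 : R) < 24*K + 1 by lraX.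
have [B0 hB0] := hind hM0.
have hD := Dj_ge0 hK1.
have hKK : 0 <= K * K by apply: mulr_ge0; lraX.
have [r er] : exists r : R, r = `|i0|%:~R + `|B0|%:~R + Dj K + 3*K*K + 1 by eexists.
have [a [har har']] := int_above r.
exists (r + 1 + Dj K + 3*K*K + 1) => m k hk; rewrite leNgt; apply/negP => hkN.
have [g [g0 [gL hg]]] := hgeo (y 0) (y m).
have hL := d_ge0 hmet (y 0) (y m).
have ni0 : i0%:~R <= (`|i0|%:~R : R) by rewrite intr_norm; apply: ler_norm.
have nB0 : B0%:~R <= (`|B0|%:~R : R) by rewrite intr_norm; apply: ler_norm.
have nn0 := ab_ge0 R i0 0; have nB00 : (0 : R) <= `|B0|%:~R by rewrite intr_norm.
have ni00 : (0 : R) <= `|i0|%:~R by rewrite intr_norm.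
have hs : exists j0, pj d (range x) (g 0) (x j0) /\ j0 <= a.
  exists i0; split; first by rewrite g0.
  rewrite -(ler_int R); lraX.
have he : exists k0, pj d (range x) (g (d (y 0) (y m))) (x k0) /\ a <= k0.
  exists k; split; first by rewrite gL.
  rewrite -(ler_int R); lraX.
have [t [j [ht0 htL hj hja]]] := projivt hmet hK1 hx hg hL hs he.
have [hja1 hja2] := ab_ge R j a.
have far : forall u v, 3*K*K + 1 <= v%:~R - u%:~R -> 2*K < d (x u) (x v).
  move=> u v huv; have := qi_lo hx u v; have [_ h] := ab_ge R u v.
  have : 3*K < `|u - v|%:~R / K.
    rewrite ltr_pdivlMr //; lraX.
  lraX.
have f1 : 2*K < d (x i0) (x j) by apply: far; lraX.
have f2 : 2*K < d (x j) (x k) by apply: far; lraX.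
have hgt0 : g 0 = y 0 := g0.
have e1 : d (y 0) (g t) = t by rewrite -{1}g0 (iso_d hg) //; lraX.
have e2 : d (g t) (y m) = d (y 0) (y m) - t by rewrite -{1}gL (iso_d hg) //.
have [c1|c1] := pe hmet hK0' hAx hgeo hi0 hj; first lraX.
have [c2|c2] := pe hmet hK0' hAx hgeo hj hk; first lraX.
have t1 := d_tri hmet (y 0) (x i0) (y m); have t2 := d_tri hmet (x i0) (x k) (y m).
have t3 := d_tri hmet (x i0) (x j) (x k).
rewrite (d_sym hmet (x k) (y m)) in t2.
have [l hl] := near_eta hg g0 gL ht0 htL.
have t4 := d_tri hmet (x j) (g t) (y l); rewrite (d_sym hmet (x j) (g t)) in t4.
have hlt : d (x j) (y l) < 24*K + 1 by lraX.
have [hjB _] := hB0 _ _ hlt.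
have : (j%:~R : R) <= `|B0|%:~R.
  apply: le_trans nB0; rewrite ler_int; exact: le_trans (ler_norm j) hjB.
lraX.
Qed.
End Indep.

Lemma refl_range (T : Type) (x : int -> T) : range (fun i => x (- i)) = range x.
Proof.
apply/seteqP; split => _ [j _ <-].
  by exists (- j).
by exists (- j) => //; rewrite opprK.
Qed.

Lemma refl_axis (R : realType) (T : Type) (d : T -> T -> R) K (x : int -> T) :
  contracting_axis d K setT x -> contracting_axis d K setT (fun i => x (- i)).
Proof.
case=> hq hc; split; last by rewrite refl_range.
move=> i j _ _; have := hq (- i) (- j) I I.
by rewrite -opprD normrN.
Qed.

Lemma refl_indep (R : realType) (T : Type) (d : T -> T -> R) (x y : int -> T) :
  independent d x y -> independent d (fun i => x (- i)) y.
Proof.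
move=> h M hM; have [B hB] := h M hM; exists B => n m hnm.
by have := hB _ _ hnm; rewrite normrN.
Qed.

Lemma bound_abs (R : realType) (T : Type) (d : T -> T -> R) (hmet : is_metric d) (hgeo : geodesic d)
  K (x y : int -> T) (hK1 : 1 < K) (hx : contracting_axis d K setT x)
  (hy : contracting_axis d K setT y) (hind : independent d x y) :
  exists N : R, forall m k, pj d (range x) (y m) (x k) -> `|k|%:~R <= N.
Proof.
have [N1 h1] := bound_up hmet hgeo hK1 hx hy hind.
have [N2 h2] := bound_up hmet hgeo hK1 (refl_axis hx) hy (refl_indep hind).
exists (Num.max N1 N2) => m k hk.
rewrite intr_norm; have := h1 _ _ hk.
have hk' : pj d (range (fun i => x (- i))) (y m) ((fun i => x (- i)) (- k)).
  by rewrite refl_range /= opprK.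
have := h2 _ _ hk'; rewrite intrN => a b.
rewrite ler_norml; apply/andP; split.
  by rewrite lerNl; apply: le_trans a _; rewrite le_max lexx orbT.
by apply: le_trans b _; rewrite le_max lexx.
Qed.

Theorem lemma3p10 (R : realType) (T : Type) (d : T -> T -> R)
  (hmet : is_metric d) (hgeo : geodesic d)
  (K : R) (hK : 1 < K) (x y : int -> T)
  (hx : contracting_axis d K setT x) (hy : contracting_axis d K setT y)
  (hind : independent d x y) :
  exists K' : R, 0 < K' /\
    (forall J : set int, consecutive J ->
       contracting_axis d K' J x /\ contracting_axis d K' J y) /\
    (forall J : set int, consecutive J -> J 0 ->
       (diam d ([set x 0%R] `|` proj_set d (x @` J) (range y)) < K'%:E)%E) /\
    (forall M : nat, (0 < M)%N ->
       (diam d ([set x 0%R] `|` proj_set d (x @` [set i : int | (0 <= i <= M%:Z)%R])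
                                        (x @` [set i : int | (i <= 0)%R]))
          < K'%:E)%E).
Proof.
have hK0' : 0 < K by lra.
have [N hN] := bound_abs hmet hgeo hK hx hy hind.
have hN0 : 0 <= N.
  have [k hk] := projx hx (y 0); apply: le_trans (hN _ _ hk); by rewrite intr_norm.
have hF := F_ge0 hK; have hG := G_ge0 hK; have hCM := CM_ge0 hK.
have hKN : 0 <= K * N by apply: mulr_ge0; lra.
have [P2 eP2] : exists P2, P2 = F K + K * N + K by eexists.
exists (K + 16*K + CM K + 2 * F K + G K + 2 * P2 + 1).
split; first lra.
split.
  move=> J hJ; split; [apply: (subaxis hmet hgeo hK hx hJ) | apply: (subaxis hmet hgeo hK hy hJ)]; lra.
split.
  move=> J hJ hJ0.
  have claim : forall a, ([set x 0] `|` proj_set d (x @` J) (range y)) a -> d (x 0) a <= P2.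
    move=> a [->|[_ [m _ <-] ha]]; first by rewrite d_xx //; lra.
    have [k hk] := projx hx (y m).
    have [c [hc trc hbc]] := subproj hmet hgeo hK hx hJ hk.
    have hck : `|0 - c| <= `|k|.
      case: trc => [e|[[h1 h2]|[h1 h2]]]; [subst c; lia | have := h2 _ hJ0; lia | have := h2 _ hJ0; lia].
    have h1 : (`|0 - c|%:~R : R) <= N by apply: le_trans (hN _ _ hk); rewrite ler_int.
    have h2 : K * `|0 - c|%:~R <= K * N by rewrite ler_pM2l.
    have := qi_hi hx 0 c; have := hbc _ ha; have := d_tri hmet (x 0) (x c) a.
    rewrite (d_sym hmet a (x c)); lra.
  apply: (@le_lt_trans _ _ (2 * P2)%:E); last by rewrite lte_fin; lra.
  apply: ge_ereal_sup => _ [a ha [b hb] <-]; rewrite lee_fin.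
  have := claim _ ha; have := claim _ hb; have := d_tri hmet a (x 0) b.
  rewrite (d_sym hmet a (x 0)); lra.
move=> M hM.
set J := [set i : int | (0 <= i <= M%:Z)%R].
have hJ : consecutive J.
  split; first by exists 0; rewrite /J /=; lia.
  move=> i j k; rewrite /J /= => /andP[h1 h2] /andP[h3 h4] /andP[h5 h6].
  apply/andP; split; lia.
have hJ0 : J 0 by rewrite /J /=; lia.
have claim : forall a, ([set x 0] `|` proj_set d (x @` J) (x @` [set i : int | (i <= 0)%R])) a ->
    d a (x 0) <= F K.
  move=> a [->|[_ [i hi <-] ha]]; first by rewrite d_xx.
  have hz := proj_self hmet (inA x i).
  have [c [hc trc hbc]] := subproj hmet hgeo hK hx hJ hz.
  suff e : c = 0 by subst c; apply: hbc.
  move: hc hi; rewrite /J /= => /andP[hc1 hc2] hi.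
  case: trc => [e|[[h1 h2]|[h1 h2]]]; [lia | have := h2 _ hJ0; lia | lia].
apply: (@le_lt_trans _ _ (2 * F K)%:E); last by rewrite lte_fin; lra.
apply: ge_ereal_sup => _ [a ha [b hb] <-]; rewrite lee_fin.
have := claim _ ha; have := claim _ hb; have := d_tri hmet a (x 0) b.
rewrite (d_sym hmet (x 0) b); lra.
Qed.
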